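(* Let $\mathcal M=(\mathbf M^{(\lambda)})_{\lambda>0}$ be a weight matrix on $\mathbb N_0^d$ such that for every $\lambda>0$ there exist $0<\kappa\le\lambda$ and $A\ge1$ with $M^{(\kappa)}_{\alpha+e_j}\le A^{|\alpha|+1}M^{(\lambda)}_\alpha$ for all $\alpha\in\mathbb N_0^d$ and $1\le j\le d$. Then the sequence space $\Lambda_{(\mathcal M)}$ is nuclear.
   Context: A weight matrix is a family $\mathcal M=(\mathbf M^{(\lambda)})_{\lambda>0}$ with $\mathbf M^{(\lambda)}=(M^{(\lambda)}_\alpha)_{\alpha\in\mathbb N_0^d}$ sequences of positive reals, $M^{(\lambda)}_0=1$, and $M^{(\lambda)}_\alpha\le M^{(\kappa)}_\alpha$ for all $\alpha$ whenever $0<\lambda\le\kappa$. $e_j$ denotes the $j$-th unit vector, $|\alpha|=\sum\alpha_j$. The associated weight function of $\mathbf M=(M_\alpha)$ is $\omega_{\mathbf M}(t)=\sup_{\alpha\in\mathbb N^d_{0,t}}\log\frac{|t^\alpha|}{M_\alpha}$ ($t\in\mathbb R^d$), where $\mathbb N^d_{0,t}=\{\alpha:\alpha_j=0\text{ whenever }t_j=0\}$ and $0^0:=1$. With $\alpha^{1/2}=(\alpha_1^{1/2},\dots,\alpha_d^{1/2})$ and $\|\mathbf c\|_{\mathbf M,h}:=\sup_\alpha|c_\alpha|e^{\omega_{\mathbf M}(\alpha^{1/2}/h)}$, $\Lambda_{(\mathcal M)}$ is the space of $\mathbf c\in\mathbb C^{\mathbb N_0^d}$ with $\|\mathbf c\|_{\mathbf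 M^{(\lambda)},h}<\infty$ for all $\lambda,h>0$, with the Fréchet topology given by the norms $\|\cdot\|_{\mathbf M^{(1/j)},1/j}$, $j\in\mathbb N$. *)

(* Defs.v *)
From HB Require Import structures.
From mathcomp Require Import all_boot all_order all_algebra.
From mathcomp Require Import all_classical all_reals all_analysis.
From mathcomp Require Import complex.
Set Implicit Arguments. Unset Strict Implicit. Unset Printing Implicit Defensive.
Import Order.TTheory GRing.Theory Num.Theory.
Local Open Scope classical_set_scope.
Local Open Scope ring_scope.

Definition mindex (d : nat) := 'I_d -> nat.

Definition unitv (d : nat) (j : 'I_d) : mindex d := fun i => nat_of_bool (i == j).
Definition maddS (d : nat) (a : mindex d) (j : 'I_d) : mindex d :=
  fun i => (a i + unitv j i)%N.
Definition mlen (d : nat) (a : mindex d) : nat := (\sum_(i < d) a i)%N.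

Definition weight_matrix (R : realType) (d : nat) (M : R -> mindex d -> R) : Prop :=
  [/\ (forall lam a, 0 < lam -> 0 < M lam a),
      (forall lam, 0 < lam -> M lam (fun=> 0%N) = 1) &
      (forall lam kap a, 0 < lam -> lam <= kap -> M lam a <= M kap a)].

(* t^alpha = prod_j t_j^alpha_j, with 0^0 = 1 *)
Definition mpow (R : realType) (d : nat) (t : 'I_d -> R) (a : mindex d) : R :=
  \prod_(i < d) t i ^+ a i.

Definition supp_ok (R : realType) (d : nat) (t : 'I_d -> R) (a : mindex d) : Prop :=
  forall j, t j = 0 -> a j = 0%N.

Definition omegaM (R : realType) (d : nat) (Mseq : mindex d -> R) (t : 'I_d -> R)
  : \bar R :=
  ereal_sup [set (ln (`|mpow t a| / Mseq a))%:E | a in supp_ok t].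

Definition sqrt_div (R : realType) (d : nat) (a : mindex d) (h : R) : 'I_d -> R :=
  fun i => Num.sqrt (a i)%:R / h.

Definition wnorm (R : realType) (d : nat) (Mseq : mindex d -> R) (h : R)
  (c : mindex d -> R[i]) : \bar R :=
  ereal_sup [set ((Normc.normc (c a))%:E * expeR (omegaM Mseq (sqrt_div a h)))%E
            | a in [set: mindex d]].

Definition LambdaM (R : realType) (d : nat) (M : R -> mindex d -> R)
  : set (mindex d -> R[i]) :=
  [set c | forall lam h : R, 0 < lam -> 0 < h -> (wnorm (M lam) h c < +oo)%E].

(* the fundamental system of norms ||.||_{M^(1/j),1/j}, j = n+1 >= 1 *)
Definition pnorm (R : realType) (d : nat) (M : R -> mindex d -> R) (n : nat)
  (c : mindex d -> R[i]) : \bar R :=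
  wnorm (M (n.+1%:R^-1)) (n.+1%:R^-1) c.

(* Nuclearity of the Frechet space Lambda_(M) (Grothendieck/Pietsch): for
   every n there is m such that the canonical map from the local Banach space
   of p_m to that of p_n is nuclear, i.e. x |-> sum_k f_k(x) y_k with
   |f_k| <= p_m and sum_k p_n(y_k) < oo.  The y_k are taken in the weighted
   sup-normed space of sequences with finite p_n (which contains the
   completion of (Lambda, p_n)). *)
Definition nuclear_LambdaM (R : realType) (d : nat) (M : R -> mindex d -> R)
  : Prop :=
  forall n : nat, exists m : nat,
  exists f : nat -> (mindex d -> R[i]) -> R[i],
  exists y : nat -> mindex d -> R[i],
  [/\ (forall k (a : R[i]) c c', LambdaM M c -> LambdaM M c' ->
          f k (fun i => a * c i + c' i) = a * f k c + f k c'),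
      (forall k c, LambdaM M c -> ((Normc.normc (f k c))%:E <= pnorm M m c)%E),
      (\sum_(0 <= k <oo) pnorm M n (y k) < +oo)%E &
      (forall c, LambdaM M c ->
         (fun N : nat => pnorm M n (fun i => c i - \sum_(k < N) f k c * y k i))
           @ \oo --> 0%E)].

(* Main.v *)
Require Import Defs.
From HB Require Import structures.
From mathcomp Require Import all_boot all_order all_algebra.
From mathcomp Require Import all_classical all_reals all_analysis.
From mathcomp Require Import complex ring lra.
Import Order.TTheory GRing.Theory Num.Theory.
Set Implicit Arguments. Unset Strict Implicit. Unset Printing Implicit Defensive.
Local Open Scope ring_scope.

Section Omega.
Variables (R : realType) (d : nat).

Lemma norm_mpow (t : 'I_d -> R) (a : mindex d) :
  `|mpow t a| = \prod_(i < d) `|t i| ^+ a i.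
Proof. by rewrite /mpow normr_prod; apply: eq_bigr => i _; rewrite normrX. Qed.

Lemma mpow_gt0 (t : 'I_d -> R) (a : mindex d) : supp_ok t a -> 0 < `|mpow t a|.
Proof.
move=> Ha; rewrite norm_mpow; apply: prodr_gt0 => i _.
have [ti0|ti0] := eqVneq (t i) 0.
  by rewrite (Ha i ti0) expr0.
by apply: exprn_gt0; rewrite normr_gt0.
Qed.

Lemma omega_ge0 (Ms : mindex d -> R) (t : 'I_d -> R) :
  Ms (fun=> 0%N) = 1 -> (0 <= omegaM Ms t)%E.
Proof.
move=> H1; apply: le_ereal_sup_tmp.
exists 0%E => //; exists (fun=> 0%N) => //.
by rewrite /mpow H1 big1 ?normr1 ?divr1 ?ln1.
Qed.

Lemma omega_mono (Ms Ms' : mindex d -> R) (t t' : 'I_d -> R) :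
  (forall b, 0 < Ms' b <= Ms b) -> (forall i, `|t i| <= `|t' i|) ->
  (omegaM Ms t <= omegaM Ms' t')%E.
Proof.
move=> HM Ht; apply: ge_ereal_sup => _ [b Hb <-].
have Hb' : supp_ok t' b.
  move=> i /eqP; rewrite -normr_eq0 => /eqP ti0; apply: Hb.
  by apply/eqP; rewrite -normr_le0 -ti0 Ht.
apply: le_ereal_sup_tmp; eexists; first by exists b.
rewrite lee_fin; have /andP[M'0 M'M] := HM b.
have p0 := mpow_gt0 Hb; have p0' := mpow_gt0 Hb'.
have M0 : 0 < Ms b by apply: lt_le_trans M'M.
rewrite ler_ln ?posrE ?divr_gt0 //.
have Hp : `|mpow t b| <= `|mpow t' b|.
  rewrite !norm_mpow; apply: ler_prod => i _.
  by rewrite exprn_ge0 //= lerXn2r ?nnegrE.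
apply: le_trans (_ : `|mpow t' b| / Ms b <= _).
  by rewrite ler_pM2r ?invr_gt0.
by rewrite ler_pM2l // lef_pV2 ?posrE.
Qed.

End Omega.

Section Step.
Variables (R : realType) (d : nat).

Lemma sum_unitv (j : 'I_d) : (\sum_(i < d) unitv j i)%N = 1%N.
Proof.
rewrite (bigD1 j) //= big1 /unitv ?eqxx // => i /negbTE ->; done.
Qed.

Lemma mpow_step (A : R) (t : 'I_d -> R) (b : mindex d) (j : 'I_d) :
  mpow (fun i => A * t i) (maddS b j) = A ^+ (mlen b).+1 * mpow t b * t j.
Proof.
rewrite /mpow /maddS.
under eq_bigr => i _ do rewrite exprMn !exprD.
rewrite big_split /= !big_split /= !prodrXr.
rewrite /mlen sum_unitv -exprSr.
rewrite [X in _ * (_ * X)](bigD1 j) //= /unitv eqxx expr1 !mulrA.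
rewrite [X in _ * X = _]big1 ?mulr1 // => i /negbTE ->; by rewrite expr0.
Qed.

Lemma omega_step (Ml Mk : mindex d -> R) (A : R) (t : 'I_d -> R) (j : 'I_d) :
  (forall b, 0 < Ml b) -> (forall b, 0 < Mk b) -> 1 <= A ->
  (forall b, Mk (maddS b j) <= A ^+ (mlen b).+1 * Ml b) -> t j != 0 ->
  (omegaM Ml t + (ln `|t j|)%:E <= omegaM Mk (fun i => (A * t i)%R))%E.
Proof.
move=> Ml0 Mk0 A1 HA tj0.
have A0 : 0 < A by apply: lt_le_trans A1.
rewrite -leeBrDr //; apply: ge_ereal_sup => _ [b Hb <-]; rewrite leeBrDr //.
apply: le_ereal_sup_tmp; eexists.
  exists (maddS b j) => //.
  move=> i /eqP; rewrite mulf_eq0 (negbTE (lt0r_neq0 A0)) /= => /eqP ti0.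
  rewrite /maddS (Hb i ti0) /unitv; case: eqVneq => // ij.
  by move: tj0; rewrite -ij ti0 eqxx.
have p0 := mpow_gt0 Hb.
have tj : 0 < `|t j| by rewrite normr_gt0.
rewrite -EFinD lee_fin -lnM ?posrE ?divr_gt0 //.
have q0 : 0 < A ^+ (mlen b).+1 by apply: exprn_gt0.
have E := mpow_step A t b j.
rewrite ler_ln ?posrE ?mulr_gt0 ?divr_gt0 ?invr_gt0 //; last first.
  by rewrite E !normrM !mulr_gt0 // normr_gt0 lt0r_neq0.
rewrite E !normrM (ger0_norm (ltW q0)).
have H := HA b; have Hk := Mk0 (maddS b j); have Hl := Ml0 b.
set P := `|mpow t b| in p0 *; set T := `|t j| in tj *.
set Q := A ^+ (mlen b).+1 in q0 H *.
apply: le_trans (_ : Q * P * T / (Q * Ml b) <= _).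
  by rewrite le_eqVlt; apply/orP; left; apply/eqP; field; rewrite !lt0r_neq0.
rewrite ler_pM2l ?mulr_gt0 // lef_pV2 ?posrE ?mulr_gt0 //.
Qed.

Definition umax (t : 'I_d -> R) := \big[Num.max/1]_(i < d) `|t i|.

Lemma umax_ge1 t : 1 <= umax t.
Proof.
rewrite /umax; apply: (big_rec (fun x => 1 <= x)) => // i x _ Hx.
by rewrite le_max Hx orbT.
Qed.

Lemma umax_ge t i : `|t i| <= umax t.
Proof.
rewrite /umax (bigD1 i) //= le_max lexx //.
Qed.

Lemma umax_cases t : umax t = 1 \/ exists j, umax t = `|t j|.
Proof.
rewrite /umax; apply: (big_ind (fun x => x = 1 \/ exists j, x = `|t j|)).
- by left.
- move=> x y Hx Hy; rewrite /Num.max; case: ifP => _; [exact: Hy | exact: Hx].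
- by move=> i _; right; exists i.
Qed.

Lemma umax_le t t' : (forall i, `|t i| <= `|t' i|) -> umax t <= umax t'.
Proof.
move=> H; rewrite {1}/umax; apply: (big_ind (fun x => x <= umax t')).
- exact: umax_ge1.
- by move=> x y Hx Hy; rewrite ge_max Hx.
- by move=> i _; apply: le_trans (H i) (umax_ge t' i).
Qed.

Lemma omega_step_max (Ml Mk : mindex d -> R) (A : R) (t : 'I_d -> R) :
  (forall b, 0 < Ml b) -> (forall b, 0 < Mk b <= Ml b) -> 1 <= A ->
  (forall b j, Mk (maddS b j) <= A ^+ (mlen b).+1 * Ml b) ->
  (omegaM Ml t + (ln (umax t))%:E <= omegaM Mk (fun i => (A * t i)%R))%E.
Proof.
move=> Ml0 Mk0 A1 HA.
have mono : (omegaM Ml t <= omegaM Mk (fun i => (A * t i)%R))%E.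
  apply: omega_mono => // i; rewrite normrM -{1}(mul1r `|t i|) ler_wpM2r //.
  by apply: le_trans A1 _; rewrite ler_norm.
case: (umax_cases t) => [->|[j ->]]; first by rewrite ln1 adde0.
have [tj0|tj0] := eqVneq (t j) 0.
  by rewrite tj0 normr0 ln0 // adde0.
apply: omega_step => // b; first by case/andP: (Mk0 b).
Qed.
End Step.

Section Chain.
Variables (R : realType) (d : nat) (M : R -> mindex d -> R).
Hypothesis HM : weight_matrix M.
Hypothesis HA : forall lam : R, 0 < lam ->
     exists kap : R, exists A : R,
       [/\ 0 < kap, kap <= lam, 1 <= A &
         forall (a : mindex d) (j : 'I_d),
           M kap (maddS a j) <= A ^+ (mlen a).+1 * M lam a].

Lemma chain lam0 : 0 < lam0 -> forall k : nat, exists lamk S : R,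
  [/\ 0 < lamk, 1 <= S &  forall t : 'I_d -> R,
   (omegaM (M lam0) t + (k%:R * ln (umax t))%:E
      <= omegaM (M lamk) (fun i => (S * t i)%R))%E].
Proof.
case: HM => Mpos M1 Mmono l0; elim=> [|k [lk [S [lk0 S1 IH]]]].
  exists lam0, 1; split => // t; rewrite mul0r adde0.
  by apply: omega_mono => [b|i]; rewrite ?Mpos ?lexx ?mul1r.
have [kap [A [k0 kl A1 HkA]]] := HA lk0.
exists kap, (A * S); split => //; first by rewrite -(mulr1 1) ler_pM.
move=> t.
have u1 := umax_ge1 t.
have Hu : ln (umax t) <= ln (umax (fun i => S * t i)).
  rewrite ler_ln ?posrE ?(lt_le_trans ltr01) ?umax_ge1 //.
  apply: umax_le => i; rewrite normrM -{1}(mul1r `|t i|) ler_wpM2r //.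
  by apply: le_trans S1 _; rewrite ler_norm.
apply: le_trans (_ : omegaM (M lk) (fun i => (S * t i)%R) + (ln (umax (fun i => (S * t i)%R)))%:E <= _)%E.
  rewrite -addn1 natrD mulrDl mul1r EFinD addeA.
  by apply: leeD => //; rewrite lee_fin.
have -> : (fun i => A * S * t i) = (fun i => A * (S * t i)).
  by apply: funext => i; rewrite mulrA.
apply: omega_step_max => // b; first by rewrite Mpos.
by rewrite Mpos //= Mmono.
Qed.
End Chain.

Section Key.
Variables (R : realType) (d : nat) (M : R -> mindex d -> R).
Hypothesis HM : weight_matrix M.
Hypothesis HA : forall lam : R, 0 < lam ->
     exists kap : R, exists A : R,
       [/\ 0 < kap, kap <= lam, 1 <= A &
         forall (a : mindex d) (j : 'I_d),
           M kap (maddS a j) <= A ^+ (mlen a).+1 * M lam a].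

Definition aw (k : nat) (a : mindex d) : \bar R :=
  expeR (omegaM (M (k.+1%:R^-1)) (sqrt_div a (k.+1%:R^-1))).

Definition Gw (a : mindex d) : R :=
  (\prod_(i < d) ((a i).+1%:R * (a i).+2%:R)) / 6 ^+ d.

Lemma Gw_gt0 a : 0 < Gw a.
Proof.
rewrite /Gw divr_gt0 ?exprn_gt0 // prodr_gt0 // => i _.
Qed.

Lemma sqrt_div_E (a : mindex d) k i : sqrt_div a (k.+1%:R^-1) i = Num.sqrt (a i)%:R * k.+1%:R :> R.
Proof. by rewrite /sqrt_div invrK. Qed.

Lemma prod_const_ord (c : R) n : \prod_(i < n) c = c ^+ n.
Proof. by elim: n => [|n IH]; rewrite ?big_ord0 ?expr0 // big_ord_recr /= IH exprSr. Qed.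

Lemma Gw_le a (u : R) : (forall i, Num.sqrt (a i)%:R <= u) -> 1 <= u ->
  Gw a <= u ^+ (4 * d).
Proof.
move=> Hu u1.
have -> : u ^+ (4 * d) = \prod_(i < d) (u ^+ 4).
  by rewrite exprM -prod_const_ord.
have -> : Gw a = \prod_(i < d) ((a i).+1%:R * (a i).+2%:R / 6).
  by rewrite /Gw -exprVn -(prod_const_ord _ d) -!big_split.
apply: ler_prod => i _; apply/andP; split.
  by rewrite divr_ge0 ?mulr_ge0.
have s0 := sqrtr_ge0 ((a i)%:R : R).
have := Hu i => Hi.
have Ha : ((a i)%:R : R) <= u ^+ 2.
  by rewrite -(@sqr_sqrtr _ (a i)%:R) //; rewrite lerXn2r ?nnegrE //; exact: le_trans ler01 u1.
have a0 : (0 : R) <= (a i)%:R by [].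
rewrite ler_pdivrMr // -!natr1.
have v1 : 1 <= u ^+ 2 by rewrite -(expr1n _ 2) lerXn2r ?nnegrE //; exact: le_trans ler01 u1.
set v := u ^+ 2 in Ha v1 *; set x := ((a i)%:R : R) in Ha a0 *.
have -> : u ^+ 4 = v * v by rewrite /v -exprD.
nra.
Qed.

Lemma key n : exists m : nat, forall a : mindex d, (aw n a * (Gw a)%:E <= aw m a)%E.
Proof.
have HM' := HM; case: HM' => Mpos M1 Mmono.
have l0 : (0 : R) < n.+1%:R^-1 by rewrite invr_gt0 ltr0Sn.
have [lk [S [lk0 S1 Hc]]] := chain HM HA l0 (4 * d).
exists (Num.Def.trunc (S * n.+1%:R + lk^-1)) => a.
set m := Num.Def.trunc _.
have Hm := truncnS_gt (S * n.+1%:R + lk^-1); rewrite -/m in Hm.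
have lk1 : 0 < lk^-1 by rewrite invr_gt0.
have Sn : S * n.+1%:R <= m.+1%:R.
  by apply: ltW; apply: le_lt_trans Hm; rewrite lerDl ltW.
have mlk : m.+1%:R^-1 <= lk.
  rewrite -(invrK lk) lef_pV2 ?posrE ?ltr0Sn //.
  apply: ltW; apply: le_lt_trans Hm; rewrite lerDr mulr_ge0 //; exact: le_trans ler01 S1.
pose T : 'I_d -> R := sqrt_div a (n.+1%:R^-1).
have uT : forall i, Num.sqrt (a i)%:R <= umax T.
  move=> i; apply: le_trans (umax_ge T i).
  rewrite /T sqrt_div_E ger0_norm ?mulr_ge0 ?sqrtr_ge0 //.
  by rewrite ler_peMr ?sqrtr_ge0 // ler1n.
have G0 := Gw_gt0 a.
have u0 : 0 < umax T by apply: lt_le_trans (umax_ge1 T).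
have HG : ln (Gw a) <= (4 * d)%:R * ln (umax T).
  rewrite mulr_natl -lnXn // ler_ln ?posrE ?exprn_gt0 //.
  exact: Gw_le uT (umax_ge1 T).
rewrite /aw -/T.
have -> : (Gw a)%:E = expeR (ln (Gw a))%:E by rewrite /= lnK ?posrE.
rewrite -expeRD lee_expeR.
apply: (le_trans (y := omegaM (M lk) (fun i => (S * T i)%R))).
  apply: le_trans (Hc T).
  by apply: leeD => //; rewrite lee_fin.
apply: omega_mono => [b|i].
  by rewrite Mpos ?invr_gt0 ?ltr0Sn //= Mmono // invr_gt0 ltr0Sn.
rewrite /T !sqrt_div_E normrM !ger0_norm ?mulr_ge0 ?sqrtr_ge0 ?(le_trans ler01) //.
rewrite mulrCA ler_wpM2l ?sqrtr_ge0 //.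
all: by rewrite ler1n.
Qed.
End Key.

Section Main.
Variables (R : realType) (d : nat) (M : R -> mindex d -> R).
Hypothesis HM : weight_matrix M.

Definition toC (x : R) : R[i] := (x%:C)%C.

Lemma normc_toC x : Normc.normc (toC x) = `|x|.
Proof. by rewrite /toC /= expr0n /= addr0 sqrtr_sqr. Qed.

Lemma toCM x y : toC (x * y) = toC x * toC y.
Proof. by rewrite /toC rmorphM. Qed.

Lemma normc_ge0 (x : R[i]) : 0 <= Normc.normc x.
Proof. by case: x => a b; rewrite /= sqrtr_ge0. Qed.

Lemma toC1 : toC 1 = 1. Proof. by []. Qed.
Lemma toC0 : toC 0 = 0. Proof. by []. Qed.

Definition Fin (a : mindex d) : {ffun 'I_d -> nat} := finfun a.
Definition idx (a : mindex d) : nat := pickle (Fin a).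
Definition enm (k : nat) : option (mindex d) :=
  omap (fun F : {ffun 'I_d -> nat} => (fun i => F i)) (pickle_inv k).

Lemma enm_idx a : enm (idx a) = Some a.
Proof.
rewrite /enm /idx pickleK_inv /=; congr Some.
by apply: funext => i; rewrite /Fin ffunE.
Qed.

Lemma idx_enm k a : enm k = Some a -> idx a = k.
Proof.
rewrite /enm; case E: (pickle_inv k) => [F|] //= [<-].
rewrite /idx /Fin.
have -> : finfun (fun i => F i) = F by apply/ffunP => i; rewrite ffunE.
by have := @pickle_invK {ffun 'I_d -> nat} k; rewrite E.
Qed.

Lemma aw_ge1 k a : (1 <= aw M k a)%E.
Proof.
case: HM => Mpos M1 _.
rewrite /aw -expeR0 lee_expeR omega_ge0 // M1 // invr_gt0 ltr0Sn.
Qed.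

Lemma aw_ge0 k a : (0 <= aw M k a)%E.
Proof. exact: le_trans (aw_ge1 k a). Qed.

Lemma pn_ge k c a : ((Normc.normc (c a))%:E * aw M k a <= pnorm M k c)%E.
Proof. by apply: le_ereal_sup_tmp; eexists; first by exists a. Qed.

Lemma pn_ge0 k c : (0 <= pnorm M k c)%E.
Proof.
apply: le_trans (pn_ge k c (fun=> 0%N)).
by rewrite mule_ge0 ?aw_ge0 // lee_fin normc_ge0.
Qed.

Lemma sum_pick (V : zmodType) N x (v : V) :
  \sum_(k < N) (if x == k :> nat then v else 0) = if (x < N)%N then v else 0.
Proof.
case: ltnP => h.
  rewrite (bigD1 (Ordinal h)) //= eqxx big1 ?addr0 // => k Hk.
  rewrite ifF //; apply/negbTE; apply: contra Hk => /eqP e.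
  by apply/eqP/val_inj => /=; rewrite e.
apply: big1 => k _; rewrite ifF //; apply/negbTE.
by rewrite neq_ltn (leq_trans (ltn_ord k) h) orbT.
Qed.

End Main.

Section Nuc.
Variables (R : realType) (d : nat) (M : R -> mindex d -> R).
Hypothesis HM : weight_matrix M.
Variables n m : nat.
Hypothesis Hkey : forall a, (aw M n a * (Gw R a)%:E <= aw M m a)%E.

Definition rr (a : mindex d) : R := fine (aw M n a) * Gw R a.
Definition ff (k : nat) (c : mindex d -> R[i]) : R[i] :=
  if enm d k is Some a then c a * toC (rr a) else 0.
Definition yy (k : nat) (b : mindex d) : R[i] :=
  if idx b == k then toC (rr b)^-1 else 0.
Definition gg (k : nat) : R := if enm d k is Some a then (Gw R a)^-1 else 0.

Lemma aw_cases k a : aw M k a = +oo%E \/ exists2 x, aw M k a = x%:E & 1 <= x.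
Proof.
have := aw_ge1 HM k a; case: (aw M k a) => [x| |] //; last by left.
by rewrite lee_fin => h; right; exists x.
Qed.

Lemma rr_ge0 a : 0 <= rr a.
Proof.
rewrite /rr; case: (aw_cases n a) => [->|[x -> x1]] /=; first by rewrite mul0r.
by apply: mulr_ge0; [apply: le_trans ler01 x1 | apply: ltW; apply: Gw_gt0].
Qed.

Lemma rr_le a : ((rr a)%:E <= aw M m a)%E.
Proof.
rewrite /rr; case: (aw_cases n a) => [E|[x E x1]]; rewrite E /=.
  by rewrite mul0r aw_ge0.
by have := Hkey a; rewrite E.
Qed.

Lemma rr_pn c a : ((Normc.normc (c a) * rr a)%:E <= pnorm M m c)%E.
Proof.
rewrite EFinM; apply: le_trans _ (pn_ge M m c a).
by apply: lee_wpmul2l; [rewrite lee_fin normc_ge0 | exact: rr_le].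
Qed.

Lemma ff_lin k (x : R[i]) c c' :
  ff k (fun i => x * c i + c' i) = x * ff k c + ff k c'.
Proof.
rewrite /ff; case: (enm d k) => [a|]; last by rewrite mulr0 addr0.
by rewrite mulrDl mulrA.
Qed.

Lemma ff_le k c : ((Normc.normc (ff k c))%:E <= pnorm M m c)%E.
Proof.
rewrite /ff; case: (enm d k) => [a|]; last by rewrite Normc.normc0 pn_ge0.
by rewrite Normc.normcM normc_toC ger0_norm ?rr_ge0 // rr_pn.
Qed.

Lemma gg_ge0 k : 0 <= gg k.
Proof. by rewrite /gg; case: (enm d k) => // a; rewrite invr_ge0; apply: ltW; apply: Gw_gt0. Qed.

Lemma yy_le k : (pnorm M n (yy k) <= (gg k)%:E)%E.
Proof.
apply: ge_ereal_sup => _ [b _ <-].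
rewrite /yy; case: eqP => [<-|_]; last by rewrite Normc.normc0 mul0e lee_fin gg_ge0.
rewrite /gg enm_idx normc_toC ger0_norm ?invr_ge0 ?rr_ge0 //.
rewrite /rr.
have -> : expeR (omegaM (M n.+1%:R^-1) (sqrt_div b n.+1%:R^-1)) = aw M n b by [].
case: (aw_cases n b) => [E|[x E x1]]; rewrite E /=.
  by rewrite mul0r invr0 mul0e lee_fin invr_ge0; apply: ltW; apply: Gw_gt0.
have G0 := Gw_gt0 R b.
rewrite -EFinM lee_fin le_eqVlt; apply/orP; left; apply/eqP.
by field; apply/andP; split; apply: lt0r_neq0 => //; apply: lt_le_trans ltr01 x1.
Qed.

Definition ww (j : nat) : R := (j.+1%:R * j.+2%:R)^-1.

Lemma ww_ge0 j : 0 <= ww j.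
Proof. by rewrite /ww invr_ge0 mulr_ge0. Qed.

Lemma sum_ww K : \sum_(j < K) ww j = 1 - K.+1%:R^-1.
Proof.
elim: K => [|K IH]; first by rewrite big_ord0 invr1 subrr.
rewrite big_ord_recr /= IH /ww.
have h1 : (K.+1%:R : R) != 0 by rewrite pnatr_eq0.
have h2 : (K.+2%:R : R) != 0 by rewrite pnatr_eq0.
rewrite -[K.+2]addn1 natrD -[K.+1]addn1 natrD.
rewrite -[K.+2]addn1 natrD -[K.+1]addn1 natrD in h2 h1.
by field; rewrite h1 h2.
Qed.

Lemma sum_ww_le K : \sum_(j < K) ww j <= 1.
Proof. by rewrite sum_ww gerBl invr_ge0. Qed.

Lemma Gw_inv (a : mindex d) : (Gw R a)^-1 = 6 ^+ d * \prod_(i < d) ww (a i).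
Proof.
rewrite /Gw invfM invrK mulrC; congr (_ * _).
by rewrite /ww prodfV.
Qed.

Definition ext K (b : {ffun 'I_d -> 'I_K}) : mindex d := fun i => nat_of_ord (b i).

Lemma ext_in K (a : mindex d) : (forall i, a i < K.+1)%N ->
  ext [ffun i => (inord (a i) : 'I_K.+1)] = a.
Proof. by move=> H; apply: funext => i; rewrite /ext ffunE inordK. Qed.

Lemma psum_bound N : \sum_(k < N) gg k <= 6 ^+ d.
Proof.
have [K HK] : exists K, forall k : 'I_N, forall a, enm d k = Some a ->
    forall i, (a i < K.+1)%N.
  elim: N => [|N [K IH]]; first by exists 0%N => -[].
  exists (maxn K (if enm d N is Some a then mlen a else 0%N)) => k a E i.
  have [kN|kN] := ltnP k N.
    by rewrite ltnS leq_max -ltnS (IH (Ordinal kN)).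
  have kN' : k = N :> nat by apply/eqP; rewrite eqn_leq kN -ltnS ltn_ord.
  rewrite ltnS leq_max -kN' E; apply/orP; right.
  by rewrite /mlen (bigD1 i) //= leq_addr.
pose h (b : {ffun 'I_d -> 'I_K.+1}) := (Gw R (ext b))^-1.
apply: le_trans (_ : \sum_(k < N) \sum_b (if idx (ext b) == k :> nat then h b else 0) <= _).
  apply: ler_sum => k _; rewrite /gg.
  case E: (enm d k) => [a|]; last by apply: sumr_ge0 => b _; case: ifP => // _; rewrite invr_ge0 ltW ?Gw_gt0.
  pose b0 := [ffun i => (inord (a i) : 'I_K.+1)].
  have eb0 : ext b0 = a by apply: ext_in; exact: HK E.
  rewrite (bigD1 b0) //= eb0 (idx_enm E) eqxx /h eb0 lerDl.
  by apply: sumr_ge0 => b _; case: ifP => // _; rewrite invr_ge0 ltW ?Gw_gt0.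
rewrite exchange_big /=.
apply: le_trans (_ : \sum_b h b <= _).
  apply: ler_sum => b _; rewrite sum_pick; case: ifP => // _.
  by rewrite invr_ge0 ltW ?Gw_gt0.
rewrite /h.
under eq_bigr => b _ do rewrite Gw_inv.
rewrite -mulr_sumr -[X in _ <= X]mulr1 ler_wpM2l ?exprn_ge0 //.
rewrite /ext -(bigA_distr_bigA (fun (i : 'I_d) (j : 'I_K.+1) => ww j)) /=.
apply: (@le_trans _ _ (\prod_(i < d) (1:R))); last by rewrite big1.
apply: ler_prod => i _.
by rewrite sumr_ge0 ?sum_ww_le // => j _; exact: ww_ge0.
Qed.

Lemma series_fin : (\sum_(0 <= k <oo) pnorm M n (yy k) < +oo)%E.
Proof.
apply: (@le_lt_trans _ _ ((6:R) ^+ d)%:E); last by rewrite ltry.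
apply: (@le_trans _ _ (\sum_(0 <= k <oo) (gg k)%:E)%E).
  apply: lee_nneseries => k; last by move=> _; exact: yy_le.
  by move=> _ _; exact: pn_ge0.
apply: lime_le; first by apply: is_cvg_nneseries => k _ _; rewrite lee_fin gg_ge0.
exists 0%N => // N _ /=.
by rewrite sumEFin lee_fin big_mkord psum_bound.
Qed.

Lemma diff_eq c N b : c b - \sum_(k < N) ff k c * yy k b =
  if (idx b < N)%N && (rr b != 0) then 0 else c b.
Proof.
have -> : \sum_(k < N) ff k c * yy k b =
    \sum_(k < N) (if idx b == k :> nat then c b * toC (rr b) * toC (rr b)^-1 else 0).
  apply: eq_bigr => k _; rewrite /yy; case: eqP => [<-|_]; last by rewrite mulr0.
  by rewrite /ff enm_idx.
rewrite sum_pick; case: ltnP => _ /=; last by rewrite subr0.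
case: eqP => [->|/eqP r0] /=; first by rewrite invr0 toC0 !mulr0 subr0.
by rewrite -mulrA -toCM divff // toC1 mulr1 subrr.
Qed.

Lemma Gw_ge (a : mindex d) i : (a i)%:R / 6 ^+ d <= Gw R a.
Proof.
rewrite /Gw ler_pM2r ?invr_gt0 ?exprn_gt0 //.
rewrite (bigD1 i) //= -[X in X <= _]mulr1 ler_pM //.
- rewrite -[X in X <= _]mulr1 ler_pM // ?ler_nat // ler1n //.
- apply: (@le_trans _ _ (\prod_(j < d | j != i) (1:R))); first by rewrite big1.
  by apply: ler_prod => j _; rewrite ler01 /= -natrM ler1n muln_gt0.
Qed.

Lemma pn_fin k c : LambdaM M c -> (pnorm M k c < +oo)%E.
Proof. by move=> Hc; apply: Hc; rewrite invr_gt0 ltr0Sn. Qed.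

Lemma diff_small c : LambdaM M c -> forall eps : R, 0 < eps ->
  exists N0, forall N, (N0 <= N)%N ->
  (pnorm M n (fun b => (c b - \sum_(k < N) ff k c * yy k b)%R) <= eps%:E)%E.
Proof.
move=> Hc eps e0.
pose P := fine (pnorm M m c).
have PE : pnorm M m c = P%:E.
  by rewrite /P fineK // ge0_fin_numE ?pn_ge0 ?pn_fin.
have P0 : 0 <= P by rewrite -lee_fin -PE pn_ge0.
pose K0 := Num.Def.trunc (P * 6 ^+ d / eps).
have HK0 := truncnS_gt (P * 6 ^+ d / eps); rewrite -/K0 in HK0.
pose N0 := (\max_(b : {ffun 'I_d -> 'I_K0.+1}) idx (ext b)).+1.
exists N0 => N HN.
apply: ge_ereal_sup => _ [b _ <-].
have -> : expeR (omegaM (M n.+1%:R^-1) (sqrt_div b n.+1%:R^-1)) = aw M n b by [].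
rewrite diff_eq; case: ifP => [_|H].
  by rewrite Normc.normc0 mul0e lee_fin ltW.
case: (aw_cases n b) => [E|[x E x1]]; rewrite E.
  have [n0|n0] := eqVneq (Normc.normc (c b)) 0; first by rewrite n0 mul0e lee_fin ltW.
  have := pn_ge M n c b; rewrite E gt0_muley; last by rewrite lte_fin lt0r n0 normc_ge0.
  by rewrite leye_eq => /eqP Hy; have := pn_fin n Hc; rewrite Hy ltxx.
have G0 := Gw_gt0 R b.
have rE : rr b = x * Gw R b by rewrite /rr E.
have rb0 : rr b != 0 by rewrite rE mulf_neq0 // lt0r_neq0 // (lt_le_trans ltr01).
move: H; rewrite rb0 andbT => /negbT; rewrite -leqNgt => Hb.
have [i Hi] : exists i, (K0 < b i)%N.
  case: (boolP [exists i, (K0 < b i)%N]) => [/existsP [i Hi]|]; first by exists i.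
  rewrite negb_exists => /forallP Hall; exfalso.
  have Hlt : forall i, (b i < K0.+1)%N by move=> i; rewrite ltnS leqNgt Hall.
  have := @leq_bigmax _ (fun b : {ffun 'I_d -> 'I_K0.+1} => idx (ext b)) [ffun i => inord (b i)].
  rewrite /= ext_in // => h.
  have : (N0 <= idx b)%N by apply: leq_trans HN Hb.
  by rewrite /N0 => h2; have := leq_trans h2 h; rewrite ltnn.
have Hrp := rr_pn c b; rewrite PE lee_fin rE in Hrp.
have Gi := Gw_ge b i.
have bi : P * 6 ^+ d / eps < (b i)%:R.
  by apply: lt_le_trans HK0 _; rewrite ler_nat.
have s0 : (0:R) < 6 ^+ d by rewrite exprn_gt0.
have PG : P <= eps * Gw R b.
  have : P < eps * ((b i)%:R / 6 ^+ d).
    have h1 : P * 6 ^+ d < (b i)%:R * eps by rewrite -ltr_pdivrMr.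
    by rewrite mulrA ltr_pdivlMr // (mulrC eps).
  move=> /ltW h; apply: le_trans h _; rewrite ler_pM2l //.
rewrite -EFinM lee_fin.
rewrite -(ler_pM2r G0); apply: le_trans PG; by rewrite -mulrA.
Qed.
End Nuc.

Theorem theorem5p3 (R : realType) (d : nat) (M : R -> mindex d -> R) :
  weight_matrix M ->
  (forall lam : R, 0 < lam ->
     exists kap : R, exists A : R,
       [/\ 0 < kap, kap <= lam, 1 <= A &
         forall (a : mindex d) (j : 'I_d),
           M kap (maddS a j) <= A ^+ (mlen a).+1 * M lam a]) ->
  nuclear_LambdaM M.
Proof.
move=> HM HA n.
have [m Hkey] := key HM HA n.
exists m, (ff M n), (yy M n); split.
- by move=> k a c c' _ _; exact: ff_lin.
- by move=> k c _; exact: (ff_le HM Hkey).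
- exact: (series_fin HM).
- move=> c Hc; apply/fine_cvgP; split.
    have [N0 HN0] := diff_small HM Hkey Hc ltr01.
    exists N0 => // N HN; rewrite ge0_fin_numE ?(pn_ge0 HM) //.
    by apply: le_lt_trans (HN0 N HN) _; rewrite ltry.
  apply/cvgr0Pnorm_le => eps e0.
  have [N0 HN0] := diff_small HM Hkey Hc e0.
  exists N0 => // N HN /=.
  have fin : pnorm M n (fun i => (c i - \sum_(k < N) ff M n k c * yy M n k i)%R) \is a fin_num.
    rewrite ge0_fin_numE ?(pn_ge0 HM) //.
    by apply: le_lt_trans (HN0 N HN) _; rewrite ltry.
  rewrite ger0_norm ?fine_ge0 ?(pn_ge0 HM) // -lee_fin fineK //.
  exact: HN0.
Qed.
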